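(* $\mathcal{TC}(\mathrm{RL}_1^P)\subsetneq\mathcal{TC}(\mathrm{RL}_2^P)$.
   Context: A right-linear grammar is $G=(N,T,P,S)$ with rules $A\to wB$ or $A\to w$ ($A,B\in N$, $w\in T^*$). For a regular language $L$, $\mathrm{Prod}_{RL}(L)$ is the minimum of $|P|$ over all right-linear grammars generating $L$, and $\mathrm{RL}_n^P=\{L\text{ regular}:\mathrm{Prod}_{RL}(L)\le n\}$. A tree-controlled grammar is a quintuple $G=(N,T,P,S,R)$ where $(N,T,P,S)$ is a context-free grammar whose rules are all non-erasing, except that $S\to\lambda$ is allowed if $S$ does not occur on the right-hand side of any rule, and $R\subseteq (N\cup T)^*$ is a regular control language. The word of level $j$ of a derivation tree is the word of all nodes of depth $j$ read left to right. $L(G)$ consists of all $z\in T^*$ having a derivation tree with yield $z$ such that the words of all levels except the last belong to $R$. For a family $\mathcal F$ of regular languages, $\mathcal{TC}(\mathcal F)$ is the family of languages generated by tree-controlled grammars with control language in $\mathcal F$. *)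

(* Defs.v *)
From mathcomp Require Import all_boot.
Set Implicit Arguments.
Unset Strict Implicit.
Unset Printing Implicit Defensive.

(* A right-linear grammar over terminal alphabet V : nonterminals M (finite),
   a finite list of rules (A, w, None) for A -> w and (A, w, Some B) for
   A -> w B, and an axiom S. *)
Section RightLinear.
Variables (M V : finType).

Inductive rl_gen (rules : seq (M * seq V * option M)) : M -> seq V -> Prop :=
| rl_term A w : (A, w, None) \in rules -> rl_gen rules A w
| rl_step A w B v : (A, w, Some B) \in rules -> rl_gen rules B v ->
    rl_gen rules A (w ++ v).
End RightLinear.

(* R belongs to RL_n^P : R is generated by some right-linear grammar with at
   most n productions, i.e. Prod_RL(R) <= n (|P| counts distinct rules). *)
Definition RLP (V : finType) (n : nat) (R : seq V -> Prop) : Prop :=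
  exists (M : finType) (rules : seq (M * seq V * option M)) (S : M),
    size (undup rules) <= n /\ forall w, R w <-> rl_gen rules S w.

(* TEps is the leaf labelled lambda (child of a node rewritten by A -> lambda). *)
Inductive tree (N T : Type) : Type :=
| TLeaf (a : T)
| TEps
| TNode (A : N) (ts : list (tree N T)).
Arguments TEps {N T}.

Section Trees.
Variables (N T : finType).

Definition label (t : tree N T) : option (N + T) :=
  match t with TLeaf a => Some (inr a) | TEps => None | TNode A _ => Some (inl A) end.

Definition node_word (t : tree N T) : seq (N + T) := pmap id [:: label t].

Fixpoint yield (t : tree N T) : seq T :=
  match t with
  | TLeaf a => [:: a]
  | TEps => [::]
  | TNode _ ts =>
      (fix yl (us : list (tree N T)) : seq T :=
         match us with [::] => [::] | u :: us' => yield u ++ yl us' end) ts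
  end.

(* depth of the tree = index of its last level *)
Fixpoint height (t : tree N T) : nat :=
  match t with
  | TNode _ ts =>
      (fix hs (us : list (tree N T)) : nat :=
         match us with [::] => 0 | u :: us' => maxn (height u).+1 (hs us') end) ts
  | _ => 0
  end.

Fixpoint level (j : nat) (t : tree N T) : seq (N + T) :=
  match j with
  | 0 => node_word t
  | j'.+1 => match t with
             | TNode _ ts => flatten (map (level j') ts)
             | _ => [::]
             end
  end.

Definition is_eps (t : tree N T) : bool := if t is TEps then true else false.

Definition rule_ok (P : seq (N * seq (N + T))) (A : N) (ts : seq (tree N T)) : Prop :=
  (A, pmap label ts) \in P /\
  (ts = [:: TEps] \/ (ts <> [::] /\ all (fun u => ~~ is_eps u) ts)).

Fixpoint valid (P : seq (N * seq (N + T))) (t : tree N T) : Prop :=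
  match t with
  | TLeaf _ => True
  | TEps => True
  | TNode A ts => rule_ok P A ts /\
      (fix vs (us : list (tree N T)) : Prop :=
         match us with [::] => True | u :: us' => valid P u /\ vs us' end) ts
  end.

Definition deriv_tree (P : seq (N * seq (N + T))) (S : N) (t : tree N T) : Prop :=
  label t = Some (inl S) /\ valid P t.

Definition tc_wf (P : seq (N * seq (N + T))) (S : N) : Prop :=
  forall A alpha, (A, alpha) \in P -> alpha = [::] ->
    A = S /\ forall B beta, (B, beta) \in P -> inl S \notin beta.

Definition tc_lang (P : seq (N * seq (N + T))) (S : N) (R : seq (N + T) -> Prop)
  (z : seq T) : Prop :=
  exists t, deriv_tree P S t /\ yield t = z /\
    forall j, j < height t -> R (level j t).
End Trees.

Definition TC_RLP (n : nat) (T : finType) (L : seq T -> Prop) : Prop :=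
  exists (N : finType) (P : seq (N * seq (N + T))) (S : N) (R : seq (N + T) -> Prop),
    tc_wf P S /\ RLP n R /\ forall z, L z <-> tc_lang P S R z.

(* Main.v *)
Require Import Defs.
From mathcomp Require Import all_boot.
Set Implicit Arguments.
Unset Strict Implicit.

Definition U := unit.
Definition Pex : seq (U * seq (U + U)) := [:: (tt, [:: inl tt; inl tt]); (tt, [:: inr tt])].
Definition Rrules : seq (U * seq (U + U) * option U) :=
  [:: (tt, [:: inl tt], Some tt); (tt, [::], None)].
Definition Rex := rl_gen Rrules tt.

Fixpoint full (k : nat) : tree U U :=
  match k with 0 => TNode tt [:: TLeaf U tt] | k'.+1 => TNode tt [:: full k'; full k'] end.

Lemma label_full k : label (full k) = Some (inl tt).
Proof. by case: k. Qed.

Lemma valid_full k : valid Pex (full k).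
Proof.
elim: k => [|k IH] /=.
  split=> //; split; first by rewrite !inE. by right.
split; last by [].
rewrite /rule_ok /= label_full /=; split; first by rewrite !inE.
by right; split => //=; case: k {IH}.
Qed.

Lemma height_full k : height (full k) = k.+1.
Proof. by elim: k => [|k IH] //=; rewrite IH maxn0 maxnn. Qed.

Lemma level_full k j : j <= k -> level j (full k) = nseq (2 ^ j) (inl tt).
Proof.
elim: k j => [|k IH] [|j] //= H.
by rewrite IH // cats0 -nseqD expnS mul2n addnn.
Qed.

Lemma yield_full k : size (yield (full k)) = 2 ^ k.
Proof. by elim: k => [|k IH] //=; rewrite cats0 size_cat IH expnS mul2n addnn. Qed.

Lemma Rex_nseq n : Rex (nseq n (inl tt)).
Proof.
rewrite /Rex; elim: n => [|n IH]; first by apply: rl_term; rewrite !inE.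
by apply: (@rl_step _ _ _ tt [:: inl tt] tt); rewrite ?inE.
Qed.

Lemma wf_ex : tc_wf Pex tt.
Proof. by move=> A al; rewrite !inE => /orP[] /eqP [_ ->]. Qed.

Lemma RLP_ex : RLP 2 Rex.
Proof. by exists _, Rrules, tt. Qed.

Lemma lang_full k : tc_lang Pex tt Rex (yield (full k)).
Proof.
exists (full k); split; first by split; [apply: label_full|apply: valid_full].
split=> // j; rewrite height_full ltnS => Hj.
by rewrite level_full //; apply: Rex_nseq.
Qed.
Section RL1.
Variables (M V : finType) (rules : seq (M * seq V * option M)).
Hypothesis Hr : size (undup rules) <= 1.

Lemma rules_eq x y : x \in rules -> y \in rules -> x = y.
Proof.
rewrite -!(mem_undup rules); move: Hr; case: (undup rules) => [|r [|? ?]] //= _.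
by rewrite !inE => /eqP -> /eqP ->.
Qed.

Lemma rl_gen_term A w : rl_gen rules A w -> (A, w, None) \in rules.
Proof.
elim=> // A' w' B v H1 _ H2.
by have := rules_eq H1 H2.
Qed.

Lemma rl_gen_uniq A w A' w' : rl_gen rules A w -> rl_gen rules A' w' -> w = w'.
Proof.
move=> /rl_gen_term H1 /rl_gen_term H2.
by have := rules_eq H1 H2 => -[].
Qed.
End RL1.

Section Bound.
Variables (N T : finType) (P : seq (N * seq (N + T))) (S : N).
Definition Bd := sumn [seq size p.2 | p <- P].

Lemma mem_bound x : x \in P -> size x.2 <= Bd.
Proof.
rewrite /Bd; elim: P => //= p ps IH; rewrite inE => /orP[/eqP ->|/IH].
  by rewrite leq_addr.
by move=> H; apply: leq_trans H (leq_addl _ _).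
Qed.

Lemma leaves_size (ts : seq (tree N T)) :
  (fix vs (us : list (tree N T)) : Prop :=
         match us with [::] => True | u :: us' => valid P u /\ vs us' end) ts ->
  (fix hs (us : list (tree N T)) : nat :=
         match us with [::] => 0 | u :: us' => maxn (height u).+1 (hs us') end) ts <= 1 ->
  all (fun u => ~~ is_eps u) ts ->
  size ((fix yl (us : list (tree N T)) : seq T :=
         match us with [::] => [::] | u :: us' => yield u ++ yl us' end) ts)
  = size (pmap (@label N T) ts).
Proof.
elim: ts => //= u us IH [Vu Vus]; rewrite geq_max => /andP[Hu Hus] /andP[Eu Eus].
case: u Vu Hu Eu => [a|//|B vs] /=.
  by move=> _ _ _; rewrite IH.
case: vs => [|v vs]; first by case=> -[_ [//|[]]].
by rewrite ltnS geq_max.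
Qed.

Lemma key n (t : tree N T) : height t <= n -> label t = Some (inl S) -> valid P t ->
  (forall j, j < height t -> level j t = [:: inl S]) -> size (yield t) <= Bd.
Proof.
elim: n t => [|n IH] [a|//|A ts] //=.
  move=> Hh _ [[_ Hts] _]; case: ts Hh Hts => [|u us] /=.
    by move=> _ [//|[]].
  by rewrite geq_max.
move=> Hh [EA]; subst A; move=> [[HP Hts] Vts] Hl.
case: Hts => [-> //|[Hne Hall]].
case: (leqP ((fix hs (us : list (tree N T)) : nat :=
         match us with [::] => 0 | u :: us' => maxn (height u).+1 (hs us') end) ts) 1) => H1.
  by rewrite leaves_size //; apply: mem_bound HP.
have := Hl 1 H1 => /=.
case: ts Hh HP Hne Hall Vts H1 Hl => [//|u [|u2 us]] /=; last first.
  move=> _ _ _ /and3P[E1 E2 _] _ _ _ H.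
  have := congr1 size H.
  by case: u E1 {H} => [a|//|B vs] _; case: u2 E2 => [b|//|C ws] _ /=.
move=> Hh _ _ _ [Vu _] H1 Hl; rewrite !cats0.
case: u Hh Vu H1 Hl => [a|//|B vs] Hh Vu H1 Hl [EB].
  by move: H1; rewrite /= maxn0.
subst B.
apply: (IH (TNode S vs)) => //=.
move=> j Hj; have H2 := Hl j.+1; rewrite /= cats0 maxn0 in H2; apply: H2; exact: Hj.
Qed.
End Bound.

Lemma not_TC1 : ~ TC_RLP 1 (tc_lang Pex tt Rex).
Proof.
case=> N [P [S [R [_ [[M [rules [S0 [Hr HR]]]] Hiff]]]]].
have Hz := (proj1 (Hiff _)) (lang_full (Bd P)).
case: Hz => t [[Hlab Hv] [Hy Hlev]].
have Hh : 0 < height t.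
  case: t Hlab Hv {Hy Hlev} => [a|//|A ts] //= _ [[_ Hts] _].
  by case: ts Hts => [[//|[]]|u us]; rewrite //= leq_max.
have HR0 : R [:: inl S].
  have := Hlev 0 Hh; case: t Hlab {Hv Hy Hlev Hh} => //= A ts [->]; by [].
have Hall : forall j, j < height t -> level j t = [:: inl S].
  move=> j Hj; apply: (rl_gen_uniq Hr (proj1 (HR _) (Hlev j Hj)) (proj1 (HR _) HR0)).
have := key (leqnn (height t)) Hlab Hv Hall.
rewrite Hy yield_full leqNgt ltn_expl //.
Qed.

Theorem mainTheorem6 :
  (forall (T : finType) (L : seq T -> Prop), TC_RLP 1 L -> TC_RLP 2 L) /\
  (exists (T : finType) (L : seq T -> Prop), TC_RLP 2 L /\ ~ TC_RLP 1 L).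
Proof.
split.
  move=> T L [N [P [S [R [Hwf [[M [rules [S0 [Hr HR]]]] Hiff]]]]]].
  exists N, P, S, R; split=> //; split=> //.
  by exists M, rules, S0; split=> //; apply: leq_trans Hr _.
exists _, (tc_lang Pex tt Rex); split; last exact: not_TC1.
by exists _, Pex, tt, Rex; split; [exact: wf_ex|split; [exact: RLP_ex|]].
Qed.
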